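(* Let $0<r<q-1$. Then \[\mathrm{ind}_{IZ}^G\chi_r\neq \mathrm{Ker}\,T_{-1,0}\oplus\mathrm{Ker}\,T_{1,2}.\]
   Context: $F$ is a finite extension of $\mathbb Q_p$ with ring of integers $\mathcal O$, uniformizer $\varpi$, residue field $\mathbb F_q$; $[x]$ is the multiplicative representative of $x\in\mathbb F_q$; $\bar a$ the reduction of $a\in\mathcal O$. $G=\mathrm{GL}_2(F)$, $K=\mathrm{GL}_2(\mathcal O)$, $Z$ the centre, $I$ the Iwahori subgroup of $K$ (lower-left entry in $\varpi\mathcal O$). $\chi_r:IZ\to\overline{\mathbb F}_p^\times$, $\begin{pmatrix} a&b\\ \varpi c&d\end{pmatrix}\mapsto\bar d^{\,r}$, $\mathrm{diag}(\varpi,\varpi)\mapsto1$; $\mathrm{ind}_{IZ}^G\chi_r$ is the compact induction, and $[g,1]$ denotes the element supported on $IZg^{-1}$ with value $1$ at $g^{-1}$. With $\beta=\begin{pmatrix}0&1\\ \varpi&0\end{pmatrix}$, $w=\begin{pmatrix}0&1\\1&0\end{pmatrix}$, $I_1=\{[\lambda]:\lambda\in\mathbb F_q\}$, $T_{-1,0},T_{1,2}$ are the $G$-endomorphisms of $\mathrm{ind}_{IZ}^G\chi_r$ with $T_{-1,0}[g,1]=\sum_{\lambda\in I_1}[g\begin{pmatrix}\varpi&\lambda\\0&1\end{pmatrix},1]$ and $T_{1,2}[g,1]=\sum_{\lambda\in I_1}[g\beta\begin{pmatrix}1&\lambda\\0&1\end{pmatrix}w,1]$. (It is known that $\mathrm{Ker}\,T_{-1,0}\cap\mathrm{Ker}\,T_{1,2}=0$.)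 *)

(* Defs.v *)
From mathcomp Require Import all_boot all_order all_algebra.
Set Implicit Arguments. Unset Strict Implicit. Unset Printing Implicit Defensive.
Import Order.TTheory GRing.Theory Num.Theory.
Local Open Scope ring_scope.

(* The base field F : a complete discretely valued field of characteristic *)
(* 0 whose residue field k is finite (of characteristic p).  These are     *)
(* exactly the finite extensions of Q_p.          *)
(* The valuation v : F -> int is only meaningful on nonzero elements.      *)

Section LocalField.
Variables (F : fieldType) (v : F -> int).

Definition vge (N : int) (x : F) : Prop := x = 0 \/ N <= v x.

Definition inO (x : F) : Prop := vge 0 x.

Definition discrete_valuation : Prop :=
  [/\ forall x y, x != 0 -> y != 0 -> v (x * y) = v x + v y,
      forall x y, x != 0 -> y != 0 -> x + y != 0 ->
                  Order.min (v x) (v y) <= v (x + y)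
    & exists x, x != 0 /\ v x = 1].

Definition v_complete : Prop :=
  forall u : nat -> F,
    (forall N : int, exists M, forall m n, (M <= m)%N -> (M <= n)%N -> vge N (u m - u n)) ->
    exists l, forall N : int, exists M, forall n, (M <= n)%N -> vge N (u n - l).

(* p-adic local field data: F with valuation v, uniformizer varpi,
   residue field k with reduction map red : O -> k (extended arbitrarily
   outside O), multiplicative (Teichmueller) representatives teich. *)
Definition padic_field (p : nat) (varpi : F) (k : finFieldType)
    (red : F -> k) (teich : k -> F) : Prop :=
  [/\ [/\ [pchar F] =i pred0, discrete_valuation & v_complete],
      varpi != 0 /\ v varpi = 1,
      p \in [pchar k],
      [/\ red 1 = 1,
          forall x y, inO x -> inO y -> red (x + y) = red x + red y,
          forall x y, inO x -> inO y -> red (x * y) = red x * red y,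
          forall a : k, exists x, inO x /\ red x = a
        & forall x, inO x -> (red x = 0 <-> vge 1 x)]
    &
      forall a : k, [/\ inO (teich a), red (teich a) = a
                       & teich a ^+ #|k| = teich a]].

End LocalField.

(* GL_2(F) is modelled inside 'M[F]_2 (invertible matrices = unitmx).     *)

Definition mx2 (F : fieldType) (a b c d : F) : 'M[F]_2 :=
  \matrix_(i < 2, j < 2)
    if (i == 0 :> nat) then (if (j == 0 :> nat) then a else b)
    else (if (j == 0 :> nat) then c else d).

Section Induction.
Variables (F : fieldType) (v : F -> int) (varpi : F) (k : finFieldType)
          (red : F -> k) (C : fieldType) (iota : {rmorphism k -> C}) (r : nat).

Definition inI (m : 'M[F]_2) : Prop :=
  [/\ forall i j, inO v (m i j),
      vge v 1 (m ord_max ord0),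
      \det m != 0 & v (\det m) = 0].

Definition inIZ (h : 'M[F]_2) : Prop :=
  exists c m, c != 0 /\ inI m /\ h = c *: m.

(* chi_r on IZ:  (a b; varpi c d) |-> dbar^r,  diag(varpi,varpi) |-> 1.
   For h = c * m (c scalar, m in I) this is the reduction of the unit part
   of the lower-right entry of h, raised to r. *)
Definition chi (h : 'M[F]_2) : C :=
  iota (red (h ord_max ord_max / varpi ^ (v (h ord_max ord_max)))) ^+ r.

(* the compact induction ind_{IZ}^G chi_r, as functions on G
   (extended by 0 to non-invertible matrices) *)
Definition in_ind (f : 'M[F]_2 -> C) : Prop :=
  [/\ forall g, g \notin unitmx -> f g = 0,
      forall h g, inIZ h -> g \in unitmx -> f (h *m g) = chi h * f g
    & exists s : seq 'M[F]_2, forall g, f g != 0 ->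
        exists2 x, x \in s & exists h, inIZ h /\ g = h *m x].

(* phi = [g,1]: supported on IZ g^{-1}, with value 1 at g^{-1} *)
Definition is_bracket (g : 'M[F]_2) (phi : 'M[F]_2 -> C) : Prop :=
  [/\ in_ind phi, phi (invmx g) = 1
    & forall x, phi x != 0 -> exists h, inIZ h /\ x = h *m invmx g].

Definition gact (g : 'M[F]_2) (f : 'M[F]_2 -> C) : 'M[F]_2 -> C :=
  fun x => f (x *m g).

Definition G_endo (T : ('M[F]_2 -> C) -> ('M[F]_2 -> C)) : Prop :=
  [/\ forall f, in_ind f -> in_ind (T f),
      forall (a : C) f1 f2, in_ind f1 -> in_ind f2 ->
        T (fun x => a * f1 x + f2 x) = (fun x => a * T f1 x + T f2 x)
    & forall g f, g \in unitmx -> in_ind f -> T (gact g f) = gact g (T f)].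

Definition hecke_op (t : k -> 'M[F]_2)
    (T : ('M[F]_2 -> C) -> ('M[F]_2 -> C)) : Prop :=
  G_endo T /\
  forall g phi (psi : k -> 'M[F]_2 -> C),
    g \in unitmx -> is_bracket g phi ->
    (forall l, is_bracket (g *m t l) (psi l)) ->
    T phi = (fun x => \sum_(l : k) psi l x).

Definition in_ker (T : ('M[F]_2 -> C) -> ('M[F]_2 -> C)) (f : 'M[F]_2 -> C) : Prop :=
  in_ind f /\ T f = (fun _ => 0).

End Induction.

Definition betam (F : fieldType) (varpi : F) : 'M[F]_2 := mx2 0 1 varpi 0.
Definition wm (F : fieldType) : 'M[F]_2 := mx2 0 1 1 0.

Definition t_m10 (F : fieldType) (k : finFieldType) (varpi : F) (teich : k -> F)
  (l : k) : 'M[F]_2 := mx2 varpi (teich l) 0 1.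
Definition t_12 (F : fieldType) (k : finFieldType) (varpi : F) (teich : k -> F)
  (l : k) : 'M[F]_2 := betam varpi *m mx2 1 (teich l) 0 1 *m wm F.

(* Main.v *)
Require Import Defs.
From mathcomp Require Import all_boot all_order all_algebra.
Import GRing.Theory.
Local Open Scope ring_scope.

(* Strategy: the Hecke operators act by
   (T_{-1,0} f)(z) = sum_m f(a_m z) and (T_{1,2} f)(z) = sum_n f(b_n z); a
   leaf argument on the Bruhat-Tits tree (via an explicit height function Mx)
   shows that [1,1] is not in Ker T_{-1,0} + Ker T_{1,2}. *)
From mathcomp Require Import zify ring.
From Stdlib Require Import ClassicalEpsilon FunctionalExtensionality.
Set Implicit Arguments. Unset Strict Implicit. Unset Printing Implicit Defensive.
Import Order.TTheory GRing.Theory Num.Theory.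
Section Mx.
Variable F : fieldType.
Implicit Types a b c d e aa bb cc dd : F.


Lemma ord2 (i : 'I_2) : i = ord0 \/ i = ord_max.
Proof. by case: i => [[|[|i]] hi] //; [left|right]; apply: val_inj. Qed.

Lemma mx2_00 a b c d : (mx2 a b c d) ord0 ord0 = a. Proof. by rewrite mxE. Qed.
Lemma mx2_01 a b c d : (mx2 a b c d) ord0 ord_max = b. Proof. by rewrite mxE. Qed.
Lemma mx2_10 a b c d : (mx2 a b c d) ord_max ord0 = c. Proof. by rewrite mxE. Qed.
Lemma mx2_11 a b c d : (mx2 a b c d) ord_max ord_max = d. Proof. by rewrite mxE. Qed.

Lemma mx2_eta (M : 'M[F]_2) :
  M = mx2 (M ord0 ord0) (M ord0 ord_max) (M ord_max ord0) (M ord_max ord_max).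
Proof.
by apply/matrixP => i j; case: (ord2 i) => ->; case: (ord2 j) => ->; rewrite mxE.
Qed.

Lemma mx2_mul a b c d aa bb cc dd :
  mx2 a b c d *m mx2 aa bb cc dd =
  mx2 (a * aa + b * cc) (a * bb + b * dd) (c * aa + d * cc) (c * bb + d * dd).
Proof.
apply/matrixP => i j; rewrite !mxE big_ord_recl big_ord1 !mxE /=.
by case: (ord2 i) => ->; case: (ord2 j) => ->.
Qed.

Lemma mx2_scale e a b c d : e *: mx2 a b c d = mx2 (e * a) (e * b) (e * c) (e * d).
Proof.
by apply/matrixP => i j; rewrite !mxE; case: (ord2 i) => ->; case: (ord2 j) => ->.
Qed.

Lemma mx2_1 : (1%:M : 'M[F]_2) = mx2 1 0 0 1.
Proof.
by apply/matrixP => i j; rewrite !mxE; case: (ord2 i) => ->; case: (ord2 j) => ->.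
Qed.

Lemma mx2_inj a b c d aa bb cc dd :
  mx2 a b c d = mx2 aa bb cc dd -> [/\ a = aa, b = bb, c = cc & d = dd].
Proof.
move=> e; split.
- by rewrite -(mx2_00 a b c d) e mx2_00.
- by rewrite -(mx2_01 a b c d) e mx2_01.
- by rewrite -(mx2_10 a b c d) e mx2_10.
- by rewrite -(mx2_11 a b c d) e mx2_11.
Qed.

Lemma det_mx2 a b c d : \det (mx2 a b c d) = a * d - b * c.
Proof.
rewrite (expand_det_row _ ord0) big_ord_recl big_ord1 /cofactor !det_mx11 !mxE /=.
rewrite expr0 expr1 !mul1r; ring.
Qed.

End Mx.

Section LF.
Variables (p : nat) (F : fieldType) (v : F -> int) (varpi : F) (k : finFieldType)
  (red : F -> k) (teich : k -> F).
Hypothesis hF : padic_field v p varpi red teich.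

Lemma hv : discrete_valuation v. Proof. by case: hF => [[]]. Qed.
Lemma varpi0 : varpi != 0. Proof. by case: hF => _ []. Qed.
Lemma vpi : v varpi = 1. Proof. by case: hF => _ []. Qed.
Lemma red1 : red 1 = 1. Proof. by case: hF => _ _ _ [] H *. Qed.
Lemma redD x y : inO v x -> inO v y -> red (x + y) = red x + red y.
Proof. by case: hF => _ _ _ [] _ H *; apply: H. Qed.
Lemma redM x y : inO v x -> inO v y -> red (x * y) = red x * red y.
Proof. by case: hF => _ _ _ [] _ _ H *; apply: H. Qed.
Lemma redZ x : inO v x -> (red x = 0 <-> vge v 1 x).
Proof. by case: hF => _ _ _ [] _ _ _ _ H *; apply: H. Qed.
Lemma teichO a : inO v (teich a). Proof. by case: hF => _ _ _ _ /(_ a) []. Qed.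
Lemma teichK a : red (teich a) = a. Proof. by case: hF => _ _ _ _ /(_ a) []. Qed.
Lemma teichX a : teich a ^+ #|k| = teich a. Proof. by case: hF => _ _ _ _ /(_ a) []. Qed.

Lemma vM x y : x != 0 -> y != 0 -> v (x * y) = v x + v y.
Proof. by case: hv => H _ _; apply: H. Qed.

Lemma v1 : v 1 = 0.
Proof. have o : (1:F) != 0 := oner_neq0 _.
have := vM o o; rewrite mulr1 => H; lia. Qed.

Lemma vN1 : v (-1) = 0.
Proof.
have h : (-1 : F) != 0 by rewrite oppr_eq0 oner_neq0.
have := vM h h; rewrite mulrNN mulr1 v1 => H; lia.
Qed.

Lemma vN x : v (- x) = v x.
Proof.
have [->|x0] := eqVneq x 0; first by rewrite oppr0.
have h : (-1 : F) != 0 by rewrite oppr_eq0 oner_neq0.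
by rewrite -mulN1r vM // vN1 add0r.
Qed.

Lemma vV x : x != 0 -> v x^-1 = - v x.
Proof.
move=> x0; have := vM (invr_neq0 x0) x0; rewrite mulVf // v1 => H; lia.
Qed.

Lemma vD N x y : x != 0 -> y != 0 -> x + y != 0 -> N <= v x -> N <= v y -> N <= v (x + y).
Proof.
case: hv => _ H _ x0 y0 s0 hx hy; have := H _ _ x0 y0 s0.
rewrite /Order.min; case: ifP => _ h; exact: le_trans h.
Qed.

Lemma vge0 N : vge v N 0. Proof. by left. Qed.

Lemma vgeE N x : x != 0 -> vge v N x <-> N <= v x.
Proof. by move=> x0; split; [case=> // /eqP; rewrite (negbTE x0)| right]. Qed.

Lemma vge_add N x y : vge v N x -> vge v N y -> vge v N (x + y).
Proof.
case=> [->|hx]; first by rewrite add0r.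
case=> [->|hy]; first by rewrite addr0 /vge; right.
have [s0|s0] := eqVneq (x + y) 0; first by left.
have [->|x0] := eqVneq x 0; first by rewrite add0r; right.
have [y0|y0] := eqVneq y 0; first by rewrite y0 addr0; right.
by right; apply: vD.
Qed.

Lemma vge_opp N x : vge v N x -> vge v N (- x).
Proof. by case=> [->|h]; [rewrite oppr0; left|right; rewrite vN]. Qed.

Lemma vge_sub N x y : vge v N x -> vge v N y -> vge v N (x - y).
Proof. by move=> hx hy; apply: vge_add => //; apply: vge_opp. Qed.

Lemma vge_mul N M x y : vge v N x -> vge v M y -> vge v (N + M) (x * y).
Proof.
case=> [->|hx]; first by rewrite mul0r; left.
case=> [->|hy]; first by rewrite mulr0; left.
have [->|x0] := eqVneq x 0; first by rewrite mul0r; left.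
have [->|y0] := eqVneq y 0; first by rewrite mulr0; left.
by right; rewrite vM //; apply: lerD.
Qed.

Lemma vge_weak N M x : M <= N -> vge v N x -> vge v M x.
Proof. by move=> h [->|hx]; [left|right; apply: le_trans hx]. Qed.

Lemma vge_mulO N x y : inO v x -> vge v N y -> vge v N (x * y).
Proof. by move=> hx hy; have := vge_mul hx hy; rewrite add0r. Qed.

Lemma vge_mulOr N x y : vge v N x -> inO v y -> vge v N (x * y).
Proof. by move=> hx hy; have := vge_mul hx hy; rewrite addr0. Qed.

Lemma vge_self x : vge v (v x) x.
Proof. by right. Qed.

Lemma vstrict x e : x != 0 -> vge v (v x + 1) e -> x + e != 0 /\ v (x + e) = v x.
Proof.
move=> x0 [->|he]; first by rewrite addr0.
have [e0|e0] := eqVneq e 0; first by rewrite e0 addr0.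
have s0 : x + e != 0.
  apply/negP => /eqP h; have : e = - x by apply/eqP; rewrite -addr_eq0 addrC h.
  move=> ex; move: he; rewrite ex vN; lia.
split=> //; apply/eqP; rewrite eq_le; apply/andP; split; last first.
  apply: vD => //; first lia.
have hx : x = (x + e) + (- e) by rewrite addrK.
have : v (x + e) <= v x \/ v (- e) <= v x.
  have [me0|me0] := eqVneq (- e) 0; first by move: e0; rewrite -oppr_eq0 me0 eqxx.
  case: hv => _ H _; have := H _ _ s0 me0; rewrite -hx => /(_ x0).
  rewrite /Order.min; case: ifP => _ h; [left|right]; exact: h.
case=> //; rewrite vN; lia.
Qed.

Lemma O0 : inO v 0. Proof. by left. Qed.
Lemma O1 : inO v 1. Proof. by right; rewrite v1. Qed.
Lemma red0 : red 0 = 0.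
Proof. have := redD O0 O0; rewrite add0r => h; apply: (@addrI _ (red 0)).
  by rewrite -h addr0. Qed.

Lemma redN x : inO v x -> red (- x) = - red x.
Proof.
move=> hx; have := redD hx (vge_opp hx); rewrite subrr red0 => /esym/eqP.
by rewrite addrC addr_eq0 => /eqP.
Qed.

Lemma redB x y : inO v x -> inO v y -> red (x - y) = red x - red y.
Proof. by move=> hx hy; rewrite redD ?redN //; apply: vge_opp. Qed.

Lemma unitP x : inO v x -> red x != 0 -> x != 0 /\ v x = 0.
Proof.
move=> hx hr; have x0 : x != 0 by apply/negP => /eqP x0; move: hr; rewrite x0 red0 eqxx.
have nv : ~ vge v 1 x by move=> /(proj2 (redZ hx)) /eqP; rewrite (negbTE hr).
split=> //; case: hx => [/eqP|hx]; first by rewrite (negbTE x0).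
move: nv; rewrite vgeE // => h; lia.
Qed.

Lemma redU x : x != 0 -> v x = 0 -> red x != 0.
Proof.
move=> x0 vx; have hO : inO v x by right; rewrite vx.
apply/negP => /eqP /(redZ hO); rewrite vgeE // vx //.
Qed.

Lemma teich0 : teich 0 = 0.
Proof.
have h1 : vge v 1 (teich 0) by apply/redZ; [apply: teichO| apply: teichK].
have [//|t0] := eqVneq (teich 0) 0.
have q1 : (1 < #|k|)%N by apply: card_finNzRing_gt1.
have vt : 1 <= v (teich 0) by move: h1; rewrite vgeE.
have e : teich 0 ^+ #|k|.-1 = 1.
  apply: (mulIf t0); rewrite mul1r -exprSr prednK ?teichX //; lia.
have : v (teich 0 ^+ #|k|.-1) = (#|k|.-1)%:Z * v (teich 0).
  elim: (#|k|.-1) => [|n IH]; first by rewrite expr0 v1 mul0r.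
  by rewrite exprS vM ?expf_neq0 // IH intS mulrDl mul1r.
rewrite e v1 => H. 
have : (1 <= (#|k|.-1)%:Z) by lia.
nia.
Qed.

Lemma teich_unit a : a != 0 -> teich a != 0 /\ v (teich a) = 0.
Proof. by move=> a0; apply: unitP; [apply: teichO|rewrite teichK]. Qed.

Lemma teich_diff a b : a != b -> teich a - teich b != 0 /\ v (teich a - teich b) = 0.
Proof.
move=> ab; apply: unitP; first by apply: vge_sub (teichO a) (teichO b).
by rewrite redB; [rewrite !teichK subr_eq0|exact: teichO|exact: teichO].
Qed.

Lemma vexpn x (m : nat) : x != 0 -> v (x ^+ m) = m%:Z * v x.
Proof.
move=> x0; elim: m => [|n IH]; first by rewrite expr0 v1 mul0r.
by rewrite exprS vM ?expf_neq0 // IH intS mulrDl mul1r.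
Qed.

Lemma vexpz x (n : int) : x != 0 -> v (x ^ n) = n * v x.
Proof.
move=> x0; case: n => m; first by apply: vexpn.
change (v ((x ^+ m.+1)^-1) = Negz m * v x).
rewrite vV ?expf_neq0 // vexpn // NegzE; lia.
Qed.

Lemma vpiz (n : int) : v (varpi ^ n) = n.
Proof. by rewrite vexpz ?varpi0 // vpi mulr1. Qed.

Definition upart x := x / varpi ^ (v x).

Lemma upart_ok x : x != 0 -> [/\ upart x != 0, v (upart x) = 0 & inO v (upart x)].
Proof.
move=> x0; have p0 : varpi ^ (v x) != 0 by apply: expfz_neq0; apply: varpi0.
have u0 : upart x != 0 by rewrite /upart mulf_neq0 ?invr_eq0.
have vu : v (upart x) = 0 by rewrite /upart vM ?invr_eq0 // vV // vpiz subrr.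
by split=> //; right; rewrite vu.
Qed.

Lemma upartM x y : x != 0 -> y != 0 -> upart (x * y) = upart x * upart y.
Proof.
move=> x0 y0; rewrite /upart vM // expfzDr ?varpi0 // invfM.
by rewrite mulrACA.
Qed.


Variables (C : fieldType) (iota : {rmorphism k -> C}) (r : nat).

Definition psi (x : F) : C := iota (red (upart x)) ^+ r.

Lemma chiE (h : 'M[F]_2) : chi v varpi red iota r h = psi (h ord_max ord_max).
Proof. by []. Qed.

Lemma vgepow N n x : vge v N x -> vge v (N + n) (x * varpi ^ n).
Proof. by move=> h; apply: vge_mul h _; right; rewrite vpiz. Qed.

Lemma psiM x y : x != 0 -> y != 0 -> psi (x * y) = psi x * psi y.
Proof.
move=> x0 y0; rewrite /psi upartM // redM; last 2 first.
- by case: (upart_ok x0).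
- by case: (upart_ok y0).
by rewrite rmorphM exprMn.
Qed.

Lemma vge_div N n e : vge v N e -> vge v (N - n) (e / varpi ^ n).
Proof. by move=> h; rewrite invr_expz; apply: vgepow. Qed.

Lemma psi_pert x e : x != 0 -> vge v (v x + 1) e -> psi (x + e) = psi x.
Proof.
move=> x0 he; have [s0 vs] := vstrict x0 he.
have h1 := vge_div (v x) he.
have h2 : vge v 1 (e / varpi ^ v x) by move: h1; rewrite addrAC subrr add0r.
have h0 : inO v (e / varpi ^ v x) := vge_weak (@ler01 int) h2.
rewrite /psi /upart vs mulrDl redD //; last by case: (upart_ok x0).
by rewrite (proj2 (redZ h0) h2) addr0.
Qed.

Lemma psi1 : psi 1 = 1.
Proof. by rewrite /psi /upart v1 expr0z divr1 red1 rmorph1 expr1n. Qed.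

Lemma psi_neq0 x : x != 0 -> psi x != 0.
Proof.
move=> x0; rewrite /psi expf_neq0 // fmorph_eq0.
by case: (upart_ok x0) => u0 vu _; apply: redU.
Qed.


Notation chiL := (chi v varpi red iota r).
Notation IZ := (inIZ v).

Definition I2 a b e d := [/\ inO v a, inO v b, vge v 1 e, inO v d &
   a * d - b * e != 0 /\ v (a * d - b * e) = 0].

Lemma inI_mx2 a b e d : I2 a b e d -> inI v (mx2 a b e d).
Proof.
case=> ha hb he hd [d0 vd]; split; rewrite ?det_mx2 ?mx2_10 //.
move=> i j; case: (ord2 i) => ->; case: (ord2 j) => ->;
  rewrite ?mx2_00 ?mx2_01 ?mx2_10 ?mx2_11 //.
by apply: vge_weak he.
Qed.

Lemma mx2_inI a b e d : inI v (mx2 a b e d) -> I2 a b e d.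
Proof.
case=> hij; rewrite mx2_10 det_mx2 => he d0 vd; split => //.
- by have := hij ord0 ord0; rewrite mx2_00.
- by have := hij ord0 ord_max; rewrite mx2_01.
- by have := hij ord_max ord_max; rewrite mx2_11.
Qed.

Lemma inO_ge0 x : x != 0 -> inO v x -> 0 <= v x.
Proof. by move=> x0; rewrite /inO vgeE. Qed.

Lemma I2_units a b e d : I2 a b e d -> [/\ a != 0, v a = 0, d != 0 & v d = 0].
Proof.
case=> ha hb he hd [D0 vD].
have hbe : vge v (v (a * d - b * e) + 1) (b * e) by rewrite vD add0r; apply: vge_mulO.
have [s0 vs] := vstrict D0 hbe.
have ad : a * d - b * e + b * e = a * d by rewrite subrK.
rewrite ad in s0 vs.
have a0 : a != 0 by apply: contraNneq s0 => ->; rewrite mul0r.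
have d0 : d != 0 by apply: contraNneq s0 => ->; rewrite mulr0.
move: vs; rewrite vM // vD => h.
have := inO_ge0 a0 ha; have := inO_ge0 d0 hd => h1 h2.
split=> //; lia.
Qed.

Lemma IZ_intro c A B E D : c != 0 -> I2 A B E D ->
  IZ (c *: mx2 A B E D) /\ chiL (c *: mx2 A B E D) = psi (c * D).
Proof.
move=> c0 hI; split; first by exists c, (mx2 A B E D); split; [done|split; [apply: inI_mx2|done]].
by rewrite chiE mx2_scale mx2_11.
Qed.

Lemma inO_inv x : x != 0 -> v x = 0 -> inO v x^-1.
Proof. by move=> x0 vx; right; rewrite vV // vx. Qed.

Lemma IZ_elim h : IZ h -> exists c a b e, [/\ c != 0, I2 a b e 1 & h = c *: mx2 a b e 1].
Proof.
case=> c [m [c0 [hm ->]]].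
rewrite (mx2_eta m) in hm *.
move: hm => /mx2_inI hI.
set a := m ord0 ord0 in hI *; set b := m ord0 ord_max in hI *;
set e := m ord_max ord0 in hI *; set d := m ord_max ord_max in hI *.
have [a0 va d0 vd] := I2_units hI.
case: hI => ha hb he hd [D0 vD].
have di : inO v d^-1 by apply: inO_inv.
exists (c * d), (a / d), (b / d), (e / d); split.
- by rewrite mulf_neq0.
- split.
  + by apply: vge_mulOr.
  + by apply: vge_mulOr.
  + by apply: vge_mulOr.
  + by apply: O1.
  + have -> : a / d * 1 - b / d * (e / d) = (a * d - b * e) / (d ^+ 2).
      by field.
    split; first by rewrite mulf_neq0 // invr_eq0 expf_neq0.
    rewrite vM ?invr_eq0 ?expf_neq0 // vV ?expf_neq0 // vexpn // vd vD; lia.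
- rewrite mx2_scale mx2_scale; congr mx2; field; done.
Qed.


Lemma scale_mul c1 c2 (A B : 'M[F]_2) : (c1 *: A) *m (c2 *: B) = (c1 * c2) *: (A *m B).
Proof. by rewrite -scalemxAl -scalemxAr scalerA. Qed.

Lemma psi_u c e : c != 0 -> vge v 1 e -> psi (c * (1 + e)) = psi c.
Proof.
move=> c0 he; rewrite mulrDr mulr1 psi_pert //.
by have := vge_mul (vge_self c) he.
Qed.

Lemma O_mul x y : inO v x -> inO v y -> inO v (x * y).
Proof. by move=> hx hy; have := vge_mul hx hy; rewrite addr0. Qed.
Lemma O_add x y : inO v x -> inO v y -> inO v (x + y). Proof. exact: vge_add. Qed.
Lemma O_opp x : inO v x -> inO v (- x). Proof. exact: vge_opp. Qed.
Lemma O_of1 x : vge v 1 x -> inO v x. Proof. by apply: vge_weak. Qed.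

Lemma IZ_mul h1 h2 : IZ h1 -> IZ h2 -> IZ (h1 *m h2) /\ chiL (h1 *m h2) = chiL h1 * chiL h2.
Proof.
move=> /IZ_elim [c1 [a1 [b1 [e1 [c10 hI1 ->]]]]] /IZ_elim [c2 [a2 [b2 [e2 [c20 hI2 ->]]]]].
have [_ k1] := IZ_intro c10 hI1; have [_ k2] := IZ_intro c20 hI2.
rewrite k1 k2 !mulr1 scale_mul mx2_mul.
move: (hI1) (hI2) => [ha1 hb1 he1 _ [D1 vD1]] [ha2 hb2 he2 _ [D2 vD2]].
have hI : I2 (a1 * a2 + b1 * e2) (a1 * b2 + b1 * 1) (e1 * a2 + 1 * e2) (e1 * b2 + 1 * 1).
  split.
  - by apply: O_add; apply: O_mul => //; apply: O_of1.
  - by apply: O_add; apply: O_mul => //; apply: O1.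
  - by rewrite mul1r; apply: vge_add => //; apply: vge_mulOr.
  - by apply: O_add; [apply: O_mul => //; apply: O_of1|apply: O_mul; apply: O1].
  - have -> : (a1 * a2 + b1 * e2) * (e1 * b2 + 1 * 1) - (a1 * b2 + b1 * 1) * (e1 * a2 + 1 * e2)
       = (a1 * 1 - b1 * e1) * (a2 * 1 - b2 * e2) by ring.
    by rewrite mulf_neq0 // vM // vD1 vD2.
have [hZ hc] := IZ_intro (mulf_neq0 c10 c20) hI.
split=> //; rewrite hc mul1r addrC psi_u ?mulf_neq0 ?psiM //.
by have := vge_mul he1 (hb2 : vge v 0 b2); rewrite addr0.
Qed.

Lemma IZ_inv h : IZ h -> exists h', [/\ IZ h', h' *m h = 1%:M & h *m h' = 1%:M].
Proof.
move=> /IZ_elim [c [a [b [e [c0 hI ->]]]]].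
move: (hI) => [ha hb he _ [D vD]].
have hI' : I2 1 (- b) (- e) a.
  split; [apply: O1|by apply: O_opp|by apply: vge_opp|done|].
  by have -> : 1 * a - - b * - e = a * 1 - b * e by ring.
have cD : c * (a * 1 - b * e) != 0 by rewrite mulf_neq0.
have [hZ _] := IZ_intro (invr_neq0 cD) hI'.
have e1 : ((c * (a * 1 - b * e))^-1 *: mx2 1 (- b) (- e) a) *m (c *: mx2 a b e 1) = 1%:M.
  have D1 : a - b * e != 0 by rewrite -[a]mulr1.
  rewrite scale_mul mx2_mul mx2_1 mx2_scale; congr mx2; field; by rewrite D1 c0.
by exists ((c * (a * 1 - b * e))^-1 *: mx2 1 (- b) (- e) a); split=> //; apply: mulmx1C.
Qed.

Lemma IZ_unit h : IZ h -> h \in unitmx.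
Proof. by move=> /IZ_inv [h' [_ e _]]; case: (mulmx1_unit e). Qed.

Lemma IZ_1 : IZ 1%:M /\ chiL 1%:M = 1.
Proof.
have hI : I2 1 0 0 1.
  by split; [apply: O1|apply: O0|apply: vge0|apply: O1|rewrite mulr0 subr0 mulr1 oner_neq0 v1].
have [hZ hc] := IZ_intro (oner_neq0 F) hI.
by rewrite -[1%:M]scale1r mx2_1; split=> //; rewrite hc mulr1 psi1.
Qed.

Definition chit (h : 'M[F]_2) : C :=
  if excluded_middle_informative (IZ h) then chiL h else 0.

Lemma chitE h : IZ h -> chit h = chiL h.
Proof. by rewrite /chit; case: excluded_middle_informative. Qed.
Lemma chitN h : ~ IZ h -> chit h = 0.
Proof. by rewrite /chit; case: excluded_middle_informative. Qed.

Lemma IZ_cancel h y : IZ h -> IZ (h *m y) -> IZ y.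
Proof.
move=> hh hhy; have [h' [hh' e _]] := IZ_inv hh.
by have [] := IZ_mul hh' hhy; rewrite mulmxA e mul1mx.
Qed.

Lemma chit_mul h y : IZ h -> chit (h *m y) = chiL h * chit y.
Proof.
move=> hh; case: (excluded_middle_informative (IZ y)) => hy.
  have [hhy hc] := IZ_mul hh hy; by rewrite !chitE.
by rewrite !chitN ?mulr0 // => /(IZ_cancel hh).
Qed.


Notation indL := (in_ind v varpi red iota r).

Definition br (g : 'M[F]_2) : 'M[F]_2 -> C := fun x => chit (x *m g).

Lemma br_ind g : g \in unitmx -> indL (br g).
Proof.
move=> gU; split.
- move=> x xU; rewrite /br chitN // => /IZ_unit; rewrite unitmx_mul.
  by rewrite (negbTE xU).
- by move=> h x hh _; rewrite /br -mulmxA chit_mul.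
- exists [:: invmx g] => x; rewrite /br => hx; exists (invmx g); first by rewrite inE.
  exists (x *m g); split; last by rewrite mulmxK.
  case: (excluded_middle_informative (IZ (x *m g))) => // /chitN e.
  by rewrite e eqxx in hx.
Qed.

Lemma br_bracket g : g \in unitmx -> is_bracket v varpi red iota r g (br g).
Proof.
move=> gU; split; first exact: br_ind.
- by rewrite /br mulVmx // chitE; case: IZ_1.
- move=> x; rewrite /br => hx; exists (x *m g); split; last by rewrite mulmxK.
  case: (excluded_middle_informative (IZ (x *m g))) => // /chitN e.
  by rewrite e eqxx in hx.
Qed.

Lemma ind_zero : indL (fun _ => 0).
Proof. by split=> //; [move=> *; rewrite mulr0|exists [::] => x; rewrite eqxx]. Qed.

Lemma ind_lin (a : C) f1 f2 : indL f1 -> indL f2 -> indL (fun x => a * f1 x + f2 x).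
Proof.
case=> [h1 h2 [s1 hs1]] [k1 k2 [s2 hs2]]; split.
- by move=> x xU; rewrite h1 // k1 // mulr0 addr0.
- by move=> h x hh xU; rewrite h2 // k2 // mulrDr mulrCA.
- exists (s1 ++ s2) => x hx.
  case: (eqVneq (f1 x) 0) => e1.
    move: hx; rewrite e1 mulr0 add0r => /hs2 [y ys hy].
    by exists y => //; rewrite mem_cat ys orbT.
  by have [y ys hy] := hs1 _ e1; exists y => //; rewrite mem_cat ys.
Qed.

Lemma ind_unit f x : indL f -> f x != 0 -> x \in unitmx.
Proof. by case=> h _ _ fx; apply: contraNT fx => /h ->. Qed.

Lemma hecke_formula (t a : k -> 'M[F]_2) T :
  hecke_op v varpi red iota r t T ->
  (forall l, t l \in unitmx) ->
  (forall y, \sum_l chit (a l *m y) = \sum_l chit (y *m t l)) ->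
  forall f, indL f -> forall z, T f z = \sum_l f (a l *m z).
Proof.
move=> [[_ Hlin _] Hbr] tU Hid f hf.
have T0 : T (fun _ => 0) = (fun _ => 0).
  have := Hlin (-1) _ _ ind_zero ind_zero.
  have -> : (fun x : 'M[F]_2 => -1 * (0 : C) + 0) = (fun _ => 0).
    by apply: functional_extensionality => x; rewrite mulr0 addr0.
  move=> ->; apply: functional_extensionality => x; by rewrite mulN1r addNr.
case: (hf) => _ _ [s].
elim: s f hf => [|y s IH] f hf Hs z.
  have -> : f = (fun _ => 0).
    apply: functional_extensionality => x.
    by case: (eqVneq (f x) 0) => // /Hs [].
  by rewrite T0 big1.
case: (boolP (y \in unitmx)) => yU; last first.
  apply: IH => // x fx; have [w] := Hs _ fx; rewrite inE; case/orP => [/eqP ->|ws] [h [hh ex]].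
    have := ind_unit hf fx; rewrite ex unitmx_mul (negbTE yU) andbF //.
  by exists w => //; exists h.
have gU : invmx y \in unitmx by rewrite unitmx_inv.
have bphi := br_bracket gU.
have bpsi : forall l, is_bracket v varpi red iota r (invmx y *m t l) (br (invmx y *m t l)).
  by move=> l; apply: br_bracket; rewrite unitmx_mul gU tU.
have Tphi := Hbr _ _ _ gU bphi bpsi.
set f' := fun x => (- f y) * br (invmx y) x + f x.
have hf' : indL f' by apply: ind_lin => //; apply: br_ind.
have Hs' : forall x, f' x != 0 -> exists2 w, w \in s & exists h, IZ h /\ x = h *m w.
  move=> x fx; case: (excluded_middle_informative (IZ (x *m invmx y))) => hx.
    exfalso; move: fx; rewrite /f' /br chitE //.
    have -> : x = (x *m invmx y) *m y by rewrite mulmxKV.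
    case: hf => _ H _; rewrite H // -mulmxA mulmxV // mulmx1.
    by rewrite mulNr mulrC addNr eqxx.
  have fx' : f x != 0 by move: fx; rewrite /f' /br chitN // mulr0 add0r.
  have [w] := Hs _ fx'; rewrite inE; case/orP => [/eqP ->|ws] [h [hh ex]].
    by exfalso; apply: hx; rewrite ex mulmxK.
  by exists w => //; exists h.
have IH' := IH _ hf' Hs'.
have -> : f = (fun x => f y * br (invmx y) x + f' x).
  apply: functional_extensionality => x; rewrite /f'; ring.
rewrite (Hlin _ _ _ (br_ind gU) hf') Tphi IH' /f' /br.
have := Hid (z *m invmx y).
under eq_bigr do rewrite mulmxA.
under [in X in _ = X -> _]eq_bigr do rewrite -mulmxA.
move=> <-; rewrite mulr_sumr -big_split /=; apply: eq_bigr => l _; ring.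
Qed.


Lemma coset_match (a t : k -> 'M[F]_2) :
  (forall m m' y, IZ (a m *m y) -> IZ (a m' *m y) -> m = m') ->
  (forall l l' y, IZ (y *m t l) -> IZ (y *m t l') -> l = l') ->
  (forall m y, IZ (a m *m y) -> exists l, IZ (y *m t l) /\ chiL (y *m t l) = chiL (a m *m y)) ->
  (forall l y, IZ (y *m t l) -> exists m, IZ (a m *m y)) ->
  forall y, \sum_l chit (a l *m y) = \sum_l chit (y *m t l).
Proof.
move=> u1 u2 e1 e2 y.
case: (excluded_middle_informative (exists m, IZ (a m *m y))) => [[m hm]|nm].
  have [l [hl hc]] := e1 _ _ hm.
  rewrite [LHS](bigD1 m) // [RHS](bigD1 l) //=.
  rewrite [X in _ + X = _]big1; last first.
    move=> m' /negbTE nm'; rewrite chitN // => hm'.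
    by have := u1 _ _ _ hm hm'; move/eqP; rewrite eq_sym nm'.
  rewrite [X in _ = _ + X]big1; last first.
    move=> l' /negbTE nl; rewrite chitN // => hl'.
    by have := u2 _ _ _ hl hl'; move/eqP; rewrite eq_sym nl.
  by rewrite !addr0 !chitE.
rewrite !big1 // => l _; rewrite chitN // => h.
- by have [m hm] := e2 _ _ h; apply: nm; exists m.
- by apply: nm; exists l.
Qed.

Lemma u_left (a a' : k -> 'M[F]_2) :
  (forall m, a' m *m a m = 1%:M) ->
  (forall m m', IZ (a m' *m a' m) -> m = m') ->
  (forall m m' y, IZ (a m *m y) -> IZ (a m' *m y) -> m = m').
Proof.
move=> inv hne m m' y h1 h2.
have [h1' [hZ' e e']] := IZ_inv h1.
have ey : y *m h1' = a' m by rewrite -(mul1mx (y *m h1')) -(inv m) -!mulmxA (mulmxA (a m)) e' mulmx1.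
have := IZ_mul h2 hZ'; rewrite -mulmxA ey => -[hh _]; exact: hne.
Qed.

Lemma u_right (t t' : k -> 'M[F]_2) :
  (forall l, t l *m t' l = 1%:M) ->
  (forall l l', IZ (t' l *m t l') -> l = l') ->
  (forall l l' y, IZ (y *m t l) -> IZ (y *m t l') -> l = l').
Proof.
move=> inv hne l l' y h1 h2.
have [h1' [hZ' e e']] := IZ_inv h1.
have ey : h1' *m y = t' l by rewrite -(mulmx1 (h1' *m y)) -(inv l) !mulmxA -(mulmxA h1') e mul1mx.
have := IZ_mul hZ' h2; rewrite mulmxA ey => -[hh _]; exact: hne.
Qed.

Lemma IZ_entries A B E D : IZ (mx2 A B E D) ->
  [/\ D != 0, inO v (A / D), inO v (B / D) & vge v 1 (E / D)].
Proof.
move=> /IZ_elim [c [a [b [e [c0 [ha hb he _ _]]]]]].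
rewrite mx2_scale => /mx2_inj [-> -> -> ->]; rewrite mulr1.
by split=> //; rewrite mulrC mulKf.
Qed.

Lemma nIZ_low x : x != 0 -> v x = 0 -> ~ IZ (mx2 1 0 x 1).
Proof. by move=> x0 vx /IZ_entries [_ _ _]; rewrite divr1 vgeE // vx. Qed.

Lemma vpi_inv : v varpi^-1 = -1. Proof. by rewrite vV ?varpi0 // vpi. Qed.
Lemma pi_inv0 : varpi^-1 != 0. Proof. by rewrite invr_eq0 varpi0. Qed.

Lemma nIZ_up x : x != 0 -> v x = 0 -> ~ IZ (mx2 1 (x / varpi) 0 1).
Proof.
move=> x0 vx /IZ_entries [_ _ +]; rewrite divr1 /inO vgeE ?mulf_neq0 ?pi_inv0 //.
by rewrite vM ?pi_inv0 // vx vpi_inv.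
Qed.

Lemma Opi : inO v varpi. Proof. by right; rewrite vpi. Qed.
Lemma vge1_pi x : inO v x -> vge v 1 (varpi * x).
Proof. by move=> hx; have := vge_mul (vge_self varpi) hx; rewrite vpi addr0. Qed.
Lemma vge1_pir x : inO v x -> vge v 1 (x * varpi).
Proof. by move=> hx; rewrite mulrC; apply: vge1_pi. Qed.
Lemma O_divpi x : vge v 1 x -> inO v (x / varpi).
Proof.
move=> hx; have := vge_mul hx (or_intror (le_refl (v varpi^-1))).
by rewrite vpi_inv subrr.
Qed.

Lemma unit_of_red x : inO v x -> red x != 0 -> x != 0 /\ v x = 0. Proof. exact: unitP. Qed.

Lemma vge1_of_red x : inO v x -> red x = 0 -> vge v 1 x.
Proof. by move=> hx /(proj1 (redZ hx)). Qed.


Definition aA m := mx2 varpi 0 (varpi * teich m) 1.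
Definition aA' m := mx2 varpi^-1 0 (- teich m) 1.
Definition tA l := mx2 varpi (teich l) 0 1.
Definition tA' l := mx2 varpi^-1 (- teich l / varpi) 0 1.
Definition bB n := mx2 1 (teich n) 0 varpi.
Definition bB' n := mx2 1 (- teich n / varpi) 0 varpi^-1.
Definition tB l := mx2 1 0 (varpi * teich l) varpi.
Definition tB' l := mx2 1 0 (- teich l) varpi^-1.

Lemma tA_eq l : t_m10 varpi teich l = tA l. Proof. by []. Qed.
Lemma tB_eq l : t_12 varpi teich l = tB l.
Proof.
rewrite /t_12 /betam /wm /tB !mx2_mul; congr mx2; ring.
Qed.

Ltac fld := rewrite ?mx2_1 !mx2_mul; congr mx2; field; by rewrite ?varpi0.

Lemma aA'_inv m : aA' m *m aA m = 1%:M. Proof. by rewrite /aA' /aA; fld. Qed.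
Lemma tA_inv l : tA l *m tA' l = 1%:M. Proof. by rewrite /tA' /tA; fld. Qed.
Lemma bB'_inv n : bB' n *m bB n = 1%:M. Proof. by rewrite /bB' /bB; fld. Qed.
Lemma tB_inv l : tB l *m tB' l = 1%:M. Proof. by rewrite /tB' /tB; fld. Qed.

Lemma aA_ne m m' : IZ (aA m' *m aA' m) -> m = m'.
Proof.
have -> : aA m' *m aA' m = mx2 1 0 (teich m' - teich m) 1 by rewrite /aA /aA'; fld.
case: (eqVneq m' m) => [->//|nm].
by have [d0 vd] := teich_diff nm; move=> /(nIZ_low d0 vd).
Qed.

Lemma tA_ne l l' : IZ (tA' l *m tA l') -> l = l'.
Proof.
have -> : tA' l *m tA l' = mx2 1 ((teich l' - teich l) / varpi) 0 1 by rewrite /tA /tA'; fld.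
case: (eqVneq l' l) => [->//|nm].
by have [d0 vd] := teich_diff nm; move=> /(nIZ_up d0 vd).
Qed.

Lemma bB_ne n n' : IZ (bB n' *m bB' n) -> n = n'.
Proof.
have -> : bB n' *m bB' n = mx2 1 ((teich n' - teich n) / varpi) 0 1 by rewrite /bB /bB'; fld.
case: (eqVneq n' n) => [->//|nm].
by have [d0 vd] := teich_diff nm; move=> /(nIZ_up d0 vd).
Qed.

Lemma tB_ne l l' : IZ (tB' l *m tB l') -> l = l'.
Proof.
have -> : tB' l *m tB l' = mx2 1 0 (teich l' - teich l) 1 by rewrite /tB /tB'; fld.
case: (eqVneq l' l) => [->//|nm].
by have [d0 vd] := teich_diff nm; move=> /(nIZ_low d0 vd).
Qed.

Ltac solveO := repeat first [ assumption | apply: O_add | apply: O_mul | apply: O_opp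
  | apply: O1 | apply: O0 | apply: teichO | apply: Opi | (apply: O_of1; assumption) ].

Lemma e1A m y : IZ (aA m *m y) ->
  exists l, IZ (y *m tA l) /\ chiL (y *m tA l) = chiL (aA m *m y).
Proof.
move=> hh; have [c [a [b [e [c0 hI eh]]]]] := IZ_elim hh.
have ey : y = aA' m *m (c *: mx2 a b e 1) by rewrite -eh mulmxA aA'_inv mul1mx.
have [_ hc] := IZ_intro c0 hI; rewrite eh hc mulr1.
have [a0 va _ _] := I2_units hI; case: (hI) => ha hb he _ [D vD].
have ra : red a != 0 by apply: redU.
exists (- red b / red a).
set l := - red b / red a.
have hl : vge v 1 (a * teich l + b).
  apply: vge1_of_red; first by solveO.
  rewrite redD ?redM //; try solveO.
  rewrite teichK /l; field; exact: ra.
have E : y *m tA l = c *: mx2 a ((a * teich l + b) / varpi) (varpi * (e - teich m * a))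
     (1 + (e * teich l - teich m * (a * teich l + b))).
  rewrite ey -scalemxAr -scalemxAl; congr (_ *: _); rewrite /aA' /tA; fld.
have hI2 : I2 a ((a * teich l + b) / varpi) (varpi * (e - teich m * a))
     (1 + (e * teich l - teich m * (a * teich l + b))).
  split=> //.
  - by apply: O_divpi.
  - by apply: vge1_pi; solveO.
  - by solveO.
  - have -> : a * (1 + (e * teich l - teich m * (a * teich l + b))) -
        (a * teich l + b) / varpi * (varpi * (e - teich m * a)) = a * 1 - b * e.
      by field; rewrite varpi0.
    by [].
have [hZ hc2] := IZ_intro c0 hI2.
rewrite E; split=> //; rewrite hc2 psi_u //.
apply: vge_sub; first by apply: vge_mulOr => //; apply: teichO.
by apply: vge_mulO => //; apply: teichO.
Qed.

Lemma e2A l y : IZ (y *m tA l) -> exists m, IZ (aA m *m y).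
Proof.
move=> hh; have [c [a [b [e [c0 hI eh]]]]] := IZ_elim hh.
have ey : y = (c *: mx2 a b e 1) *m tA' l by rewrite -eh -mulmxA tA_inv mulmx1.
have [a0 va _ _] := I2_units hI; case: (hI) => ha hb he _ [D vD].
have ra : red a != 0 by apply: redU.
have hep : inO v (e / varpi) by apply: O_divpi.
exists (- red (e / varpi) / red a).
set m := - red (e / varpi) / red a.
have hm : vge v 1 (teich m * a + e / varpi).
  apply: vge1_of_red; first by solveO.
  rewrite redD; try solveO.
  rewrite (redM (teichO _) ha) teichK /m; field; exact: ra.
have E : aA m *m y = c *: mx2 a (- a * teich l + varpi * b) (teich m * a + e / varpi)
     (1 - teich l * (teich m * a + e / varpi) + varpi * teich m * b).
  rewrite ey mulmxA -scalemxAr -scalemxAl; congr (_ *: _); rewrite /aA /tA'; fld.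
have hI2 : I2 a (- a * teich l + varpi * b) (teich m * a + e / varpi)
     (1 - teich l * (teich m * a + e / varpi) + varpi * teich m * b).
  split=> //.
  - by solveO.
  - by solveO.
  - have -> : a * (1 - teich l * (teich m * a + e / varpi) + varpi * teich m * b) -
        (- a * teich l + varpi * b) * (teich m * a + e / varpi) = a * 1 - b * e.
      by field; rewrite varpi0.
    by [].
by have [hZ _] := IZ_intro c0 hI2; rewrite E.
Qed.

Lemma e1B n y : IZ (bB n *m y) ->
  exists l, IZ (y *m tB l) /\ chiL (y *m tB l) = chiL (bB n *m y).
Proof.
move=> hh; have [c [a [b [e [c0 hI eh]]]]] := IZ_elim hh.
have ey : y = bB' n *m (c *: mx2 a b e 1) by rewrite -eh mulmxA bB'_inv mul1mx.
have [_ hc] := IZ_intro c0 hI; rewrite eh hc.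
have [a0 va _ _] := I2_units hI; case: (hI) => ha hb he _ [D vD].
have hep : inO v (e / varpi) by apply: O_divpi.
exists (- red (e / varpi)).
set l := - red (e / varpi).
have hl : vge v 1 (e / varpi + teich l).
  apply: vge1_of_red; first by solveO.
  by rewrite redD // ?teichK /l ?subrr ?addrN //; solveO.
have E : y *m tB l = c *: mx2 (a - teich n * (e / varpi) + varpi * b * teich l - teich n * teich l)
     (varpi * b - teich n) (e / varpi + teich l) 1.
  rewrite ey -scalemxAr -scalemxAl; congr (_ *: _); rewrite /bB' /tB; fld.
have hI2 : I2 (a - teich n * (e / varpi) + varpi * b * teich l - teich n * teich l)
     (varpi * b - teich n) (e / varpi + teich l) 1.
  split=> //; try solveO.
  have -> : (a - teich n * (e / varpi) + varpi * b * teich l - teich n * teich l) * 1 -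
        (varpi * b - teich n) * (e / varpi + teich l) = a * 1 - b * e.
    by field; rewrite varpi0.
  by [].
have [hZ hc2] := IZ_intro c0 hI2.
by rewrite E; split.
Qed.

Lemma e2B l y : IZ (y *m tB l) -> exists n, IZ (bB n *m y).
Proof.
move=> hh; have [c [a [b [e [c0 hI eh]]]]] := IZ_elim hh.
have ey : y = (c *: mx2 a b e 1) *m tB' l by rewrite -eh -mulmxA tB_inv mulmx1.
have [a0 va _ _] := I2_units hI; case: (hI) => ha hb he _ [D vD].
exists (- red b).
set n := - red b.
have hn : vge v 1 (b + teich n).
  apply: vge1_of_red; first by solveO.
  by rewrite redD // ?teichK /n ?subrr ?addrN //; solveO.
have E : bB n *m y = c *: mx2 (a + teich n * e - teich l * (b + teich n))
     ((b + teich n) / varpi) (varpi * (e - teich l)) 1.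
  rewrite ey mulmxA -scalemxAr -scalemxAl; congr (_ *: _); rewrite /bB /tB'; fld.
have hI2 : I2 (a + teich n * e - teich l * (b + teich n))
     ((b + teich n) / varpi) (varpi * (e - teich l)) 1.
  split.
  - by solveO.
  - by apply: O_divpi.
  - by apply: vge1_pi; solveO.
  - by apply: O1.
  - have -> : (a + teich n * e - teich l * (b + teich n)) * 1 -
        (b + teich n) / varpi * (varpi * (e - teich l)) = a * 1 - b * e.
      by field; rewrite varpi0.
    by [].
by have [hZ _] := IZ_intro c0 hI2; rewrite E.
Qed.

Lemma idA y : \sum_l chit (aA l *m y) = \sum_l chit (y *m tA l).
Proof.
apply: coset_match.
- apply: (u_left aA'_inv) => m m'; exact: aA_ne.
- apply: (u_right tA_inv) => l l'; exact: tA_ne.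
- exact: e1A.
- exact: e2A.
Qed.

Lemma idB y : \sum_l chit (bB l *m y) = \sum_l chit (y *m tB l).
Proof.
apply: coset_match.
- apply: (u_left bB'_inv) => m m'; exact: bB_ne.
- apply: (u_right tB_inv) => l l'; exact: tB_ne.
- exact: e1B.
- exact: e2B.
Qed.


Lemma unit_mx2 (a b c d : F) : (mx2 a b c d \in unitmx) = (a * d - b * c != 0).
Proof. by rewrite unitmxE det_mx2 unitfE. Qed.

Lemma formulaA T : hecke_op v varpi red iota r (t_m10 varpi teich) T ->
  forall f, indL f -> forall z, T f z = \sum_l f (aA l *m z).
Proof.
move=> hT; apply: hecke_formula hT _ idA => l.
by rewrite /t_m10 unit_mx2 mulr1 mulr0 subr0 varpi0.
Qed.

Lemma formulaB T : hecke_op v varpi red iota r (t_12 varpi teich) T ->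
  forall f, indL f -> forall z, T f z = \sum_l f (bB l *m z).
Proof.
move=> hT; apply: hecke_formula hT _ _ => [l|y].
  by rewrite tB_eq unit_mx2 mul0r subr0 mul1r varpi0.
by rewrite idB; apply: eq_bigr => l _; rewrite tB_eq.
Qed.

Definition vmin (a b : F) := if a == 0 then v b else if b == 0 then v a
  else if v a <= v b then v a else v b.

Lemma vminP a b : (a != 0 \/ b != 0) -> forall n, (vge v n a /\ vge v n b) <-> n <= vmin a b.
Proof.
move=> ab n; rewrite /vmin.
case: (eqVneq a 0) ab => [->|a0] ab.
  have b0 : b != 0 by case: ab => [/negP h|//]; exfalso; apply: h.
  rewrite (@vgeE n b b0); split; [by case|by move=> h; split; [left|]].
case: (eqVneq b 0) => [->|b0].
  by rewrite (@vgeE n a a0); split; [case|move=> h; split; [|left]].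
rewrite !vgeE //; case: ifP => h; split; try (case; lia); lia.
Qed.

Lemma vmin_eq a b a1 b1 : (a != 0 \/ b != 0) -> (a1 != 0 \/ b1 != 0) ->
  (forall n, (vge v n a /\ vge v n b) <-> (vge v n a1 /\ vge v n b1)) -> vmin a b = vmin a1 b1.
Proof.
move=> h1 h2 H; apply/eqP; rewrite eq_le; apply/andP; split.
- by apply/(vminP h2 _); apply/H; apply/(vminP h1 _).
- by apply/(vminP h1 _); apply/H; apply/(vminP h2 _).
Qed.

Lemma vmin_scale c a b : c != 0 -> (a != 0 \/ b != 0) -> vmin (c * a) (c * b) = v c + vmin a b.
Proof.
move=> c0 ab; rewrite /vmin !mulf_eq0 (negbTE c0).
case: (eqVneq a 0) ab => [->|a0] ab /=.
  have b0 : b != 0 by case: ab => [/negP h|//]; exfalso; apply: h.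
  by rewrite vM.
case: (eqVneq b 0) => [_|b0]; first by rewrite vM.
rewrite !vM //; case: ifP; case: ifP => //; lia.
Qed.

Lemma vmin_K A B E D x1 x3 : inO v A -> inO v B -> inO v E -> inO v D ->
  A * D - B * E != 0 -> v (A * D - B * E) = 0 -> (x1 != 0 \/ x3 != 0) ->
  vmin (A * x1 + B * x3) (E * x1 + D * x3) = vmin x1 x3.
Proof.
move=> hA hB hE hD d0 vd nz.
set del := A * D - B * E.
have hdi : inO v del^-1 by apply: inO_inv.
have ex1 : x1 = del^-1 * (D * (A * x1 + B * x3) - B * (E * x1 + D * x3)) by rewrite /del; field.
have ex3 : x3 = del^-1 * (A * (E * x1 + D * x3) - E * (A * x1 + B * x3)) by rewrite /del; field.
have nz' : A * x1 + B * x3 != 0 \/ E * x1 + D * x3 != 0.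
  case: (eqVneq (A * x1 + B * x3) 0) => u1; last by left.
  case: (eqVneq (E * x1 + D * x3) 0) => u2; last by right.
  exfalso; move: ex1 ex3 nz; rewrite u1 u2 !mulr0 subr0 mulr0 => -> ->.
  by rewrite eqxx; case.
apply: vmin_eq => // n; split.
- case=> h1 h3; split; [rewrite ex1|rewrite ex3]; apply: vge_mulO => //;
    apply: vge_sub; apply: vge_mulO => //.
- case=> h1 h3; split; apply: vge_add; apply: vge_mulO => //.
Qed.

Definition Hh (x : 'M[F]_2) := v (\det x) - 2 * vmin (x ord0 ord0) (x ord_max ord0).
Definition bet := betam varpi.
Definition Mx (x : 'M[F]_2) := if Hh x < Hh (bet *m x) then Hh (bet *m x) else Hh x.

Lemma Hh_mx2 a b c d : Hh (mx2 a b c d) = v (a * d - b * c) - 2 * vmin a c.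
Proof. by rewrite /Hh det_mx2 mx2_00 mx2_10. Qed.

Lemma Hh_K c A B E D x : c != 0 -> inO v A -> inO v B -> inO v E -> inO v D ->
  A * D - B * E != 0 -> v (A * D - B * E) = 0 -> x \in unitmx ->
  Hh ((c *: mx2 A B E D) *m x) = Hh x.
Proof.
move=> c0 hA hB hE hD d0 vd xU.
rewrite (mx2_eta x) in xU *; move: xU.
set x1 := x ord0 ord0; set x2 := x ord0 ord_max; set x3 := x ord_max ord0; set x4 := x ord_max ord_max.
rewrite unit_mx2 => dx.
have nz : x1 != 0 \/ x3 != 0.
  case: (eqVneq x1 0) => h1; last by left.
  case: (eqVneq x3 0) => h3; last by right.
  by move: dx; rewrite h1 h3 !mul0r mulr0 subrr eqxx.
rewrite -scalemxAl mx2_mul mx2_scale !Hh_mx2 vmin_scale //; last first.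
  case: (eqVneq (A * x1 + B * x3) 0) => u1; last by left.
  case: (eqVneq (E * x1 + D * x3) 0) => u2; last by right.
  exfalso; have : (A * D - B * E) * (x1 * x4 - x2 * x3) = 0.
    have -> : (A * D - B * E) * (x1 * x4 - x2 * x3) =
      (A * x1 + B * x3) * (E * x2 + D * x4) - (A * x2 + B * x4) * (E * x1 + D * x3) by ring.
    by rewrite u1 u2 mul0r mulr0 subrr.
  by move/eqP; rewrite mulf_eq0 (negbTE d0) (negbTE dx).
rewrite vmin_K //.
have -> : c * (A * x1 + B * x3) * (c * (E * x2 + D * x4)) - c * (A * x2 + B * x4) * (c * (E * x1 + D * x3))
  = (c * c) * ((A * D - B * E) * (x1 * x4 - x2 * x3)) by ring.
rewrite (vM (mulf_neq0 c0 c0) (mulf_neq0 d0 dx)) (vM c0 c0) (vM d0 dx) vd; lia.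
Qed.

Lemma Hh_IZ h x : IZ h -> x \in unitmx ->
  Hh (h *m x) = Hh x /\ Hh (bet *m (h *m x)) = Hh (bet *m x).
Proof.
move=> /IZ_elim [c [a [b [e [c0 [ha hb he _ [D vD]] ->]]]]] xU; split.
  by apply: Hh_K => //; [apply: O_of1|apply: O1].
have -> : bet *m (c *: mx2 a b e 1 *m x) = (c *: mx2 1 (e / varpi) (varpi * b) a) *m (bet *m x).
  have eb : bet *m (c *: mx2 a b e 1) = (c *: mx2 1 (e / varpi) (varpi * b) a) *m bet.
    rewrite -scalemxAr -scalemxAl; congr (_ *: _).
    rewrite /bet /betam !mx2_mul; congr mx2; field; by rewrite ?varpi0.
  by rewrite mulmxA eb mulmxA.
apply: Hh_K => //.
- by apply: O1.
- by apply: O_divpi.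
- by solveO.
- by have -> : 1 * a - e / varpi * (varpi * b) = a * 1 - b * e by field; rewrite varpi0.
- by have -> : 1 * a - e / varpi * (varpi * b) = a * 1 - b * e by field; rewrite varpi0.
- by rewrite unitmx_mul xU /bet /betam unit_mx2 !mul0r mul1r sub0r oppr_eq0 varpi0.
Qed.

Lemma Mx_IZ h x : IZ h -> x \in unitmx -> Mx (h *m x) = Mx x.
Proof. by move=> hh xU; rewrite /Mx; case: (Hh_IZ hh xU) => -> ->. Qed.

Lemma Mx1 : Mx 1%:M = 0.
Proof.
rewrite /Mx mulmx1 mx2_1 /bet /betam !Hh_mx2 /vmin !eqxx oner_eq0 /=.
rewrite !mulr1 !mulr0 subr0 ?mul0r sub0r vN vpi v1.
by rewrite mul1r vpi.
Qed.

Lemma Mx_IZ1 h : IZ h -> Mx h = 0.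
Proof. by move=> hh; rewrite -[h]mulmx1 Mx_IZ ?unitmx1 // Mx1. Qed.

Definition lmu m := mx2 1 0 (teich m) 1.
Definition nmu n := mx2 1 (teich n / varpi) 0 1.

Lemma fanA m (x : 'M[F]_2) : aA m *m (aA' 0 *m x) = lmu m *m x.
Proof. by rewrite mulmxA /aA /aA' /lmu teich0; congr (_ *m x); fld. Qed.
Lemma fanB n (x : 'M[F]_2) : bB n *m (bB' 0 *m x) = nmu n *m x.
Proof. by rewrite mulmxA /bB /bB' /nmu teich0; congr (_ *m x); fld. Qed.
Lemma lmu0 : lmu 0 = 1%:M. Proof. by rewrite /lmu teich0 mx2_1. Qed.
Lemma nmu0 : nmu 0 = 1%:M. Proof. by rewrite /nmu teich0 mul0r mx2_1. Qed.

Lemma bet_mul x1 x2 x3 x4 : bet *m mx2 x1 x2 x3 x4 = mx2 x3 x4 (varpi * x1) (varpi * x2).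
Proof. by rewrite /bet /betam mx2_mul; congr mx2; ring. Qed.

Lemma Hh_bet x1 x2 x3 x4 : x1 * x4 - x2 * x3 != 0 ->
  Hh (bet *m mx2 x1 x2 x3 x4) = v (x1 * x4 - x2 * x3) + 1 - 2 * vmin x3 (varpi * x1).
Proof.
move=> d0; rewrite bet_mul Hh_mx2.
have -> : x3 * (varpi * x2) - x4 * (varpi * x1) = - (varpi * (x1 * x4 - x2 * x3)) by ring.
rewrite vN vM ?varpi0 // vpi; lia.
Qed.

Lemma vmin_l a : vmin a 0 = v a.
Proof. by rewrite /vmin eqxx; case: ifP => // /eqP ->. Qed.
Lemma vmin_r b : vmin 0 b = v b.
Proof. by rewrite /vmin eqxx. Qed.
Lemma vmin_nz a b : a != 0 -> b != 0 -> vmin a b = if v a <= v b then v a else v b.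
Proof. by move=> a0 b0; rewrite /vmin (negbTE a0) (negbTE b0). Qed.

Lemma vmin_le a b : a != 0 -> b != 0 -> v a <= v b -> vmin a b = v a.
Proof. by move=> a0 b0 h; rewrite vmin_nz // h. Qed.
Lemma vmin_ge a b : a != 0 -> b != 0 -> v b <= v a -> vmin a b = v b.
Proof. by move=> a0 b0 h; rewrite vmin_nz //; case: ifP => // h'; apply/eqP; rewrite eq_le h'. Qed.

Ltac ifl := repeat match goal with |- context [v ?t] => let D := fresh "D" in set D := v t end;
  repeat (case: ifP => [?|/negbT ?]); lia.

Lemma Mx_down x1 x2 x4 : x1 != 0 -> x4 != 0 -> Mx (mx2 x1 x2 0 x4) = v (x1 * x4) - 2 * v x1.
Proof.
move=> h1 h4; have d0 : x1 * x4 - x2 * 0 != 0 by rewrite mulr0 subr0 mulf_neq0.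
rewrite /Mx Hh_bet // Hh_mx2 vmin_l vmin_r mulr0 subr0 !vM ?varpi0 // vpi.
case: ifP; lia.
Qed.

Lemma Mx_down_fan m x1 x2 x4 : m != 0 -> x1 != 0 -> x4 != 0 ->
  Mx (lmu m *m mx2 x1 x2 0 x4) = Mx (mx2 x1 x2 0 x4) + 1.
Proof.
move=> m0 h1 h4; have [t0 vt] := teich_unit m0.
rewrite Mx_down //.
have -> : lmu m *m mx2 x1 x2 0 x4 = mx2 x1 x2 (teich m * x1) (teich m * x2 + x4).
  by rewrite /lmu mx2_mul; congr mx2; ring.
have d0 : x1 * (teich m * x2 + x4) - x2 * (teich m * x1) != 0.
  have -> : x1 * (teich m * x2 + x4) - x2 * (teich m * x1) = x1 * x4 by ring.
  by rewrite mulf_neq0.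
rewrite /Mx Hh_bet // Hh_mx2.
have -> : x1 * (teich m * x2 + x4) - x2 * (teich m * x1) = x1 * x4 by ring.
have vtx : v (teich m * x1) = v x1 by rewrite vM // vt add0r.
have vpx : v (varpi * x1) = 1 + v x1 by rewrite vM ?varpi0 // vpi.
rewrite (@vmin_le x1); [|done|by rewrite mulf_neq0|by rewrite vtx].
rewrite (@vmin_le (teich m * x1)); [|by rewrite mulf_neq0|by rewrite mulf_neq0 ?varpi0|
   by rewrite vtx vpx; lia].
rewrite vtx vM //; ifl.
Qed.

Lemma Mx_up x1 x2 x3 x4 : x1 * x4 - x2 * x3 != 0 -> x3 != 0 -> (x1 = 0 \/ v x3 <= v x1) ->
  Mx (mx2 x1 x2 x3 x4) = v (x1 * x4 - x2 * x3) - 2 * v x3 + 1.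
Proof.
move=> dx h3 hx; rewrite /Mx Hh_bet // Hh_mx2.
case: (eqVneq x1 0) => [e1|x10].
  by rewrite e1 mulr0 vmin_l vmin_r; ifl.
case: hx => [e1|hx]; first by rewrite e1 eqxx in x10.
have vpx : v (varpi * x1) = 1 + v x1 by rewrite vM ?varpi0 // vpi.
rewrite (@vmin_ge x1) //.
rewrite (@vmin_le x3); [|done|by rewrite mulf_neq0 ?varpi0|by rewrite vpx; lia].
ifl.
Qed.

Lemma Mx_up_fan n x1 x2 x3 x4 : n != 0 -> x1 * x4 - x2 * x3 != 0 -> x3 != 0 ->
  (x1 = 0 \/ v x3 <= v x1) ->
  Mx (nmu n *m mx2 x1 x2 x3 x4) = Mx (mx2 x1 x2 x3 x4) + 1.
Proof.
move=> n0 dx h3 hx; have [t0 vt] := teich_unit n0.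
rewrite Mx_up //.
set u := teich n / varpi * x3.
have u0 : u != 0 by rewrite /u !mulf_neq0 ?invr_eq0 ?varpi0.
have vu : v u = v x3 - 1 by rewrite /u (vM (mulf_neq0 t0 pi_inv0) h3) (vM t0 pi_inv0) vt vpi_inv; lia.
have [w0 vw] : x1 + u != 0 /\ v (x1 + u) = v x3 - 1.
  case: (eqVneq x1 0) => [->|x10]; first by rewrite add0r.
  case: hx => [e1|hx]; first by rewrite e1 eqxx in x10.
  rewrite addrC -vu; apply: vstrict => //.
  by right; rewrite vu; lia.
have -> : nmu n *m mx2 x1 x2 x3 x4 = mx2 (x1 + u) (x2 + teich n / varpi * x4) x3 x4.
  by rewrite /nmu /u mx2_mul; congr mx2; ring.
have ed : (x1 + u) * x4 - (x2 + teich n / varpi * x4) * x3 = x1 * x4 - x2 * x3 by rewrite /u; ring.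
have d1 : (x1 + u) * x4 - (x2 + teich n / varpi * x4) * x3 != 0 by rewrite ed.
rewrite /Mx Hh_bet // Hh_mx2 ed.
have vpx : v (varpi * (x1 + u)) = v x3 by rewrite vM ?varpi0 // vpi vw; lia.
rewrite (@vmin_le (x1 + u)); [|done|done|by rewrite vw; lia].
rewrite (@vmin_le x3); [|done|by rewrite mulf_neq0 ?varpi0|by rewrite vpx].
rewrite vw; ifl.
Qed.


Lemma bound_seq (s : seq 'M[F]_2) : exists N : int, forall y, y \in s -> Mx y <= N.
Proof.
elim: s => [|y s [N HN]]; first by exists 0.
exists (if Mx y < N then N else Mx y) => z; rewrite inE => /orP [/eqP ->|/HN]; ifl.
Qed.

Lemma lmu_unit m : lmu m \in unitmx.
Proof. by rewrite unit_mx2 mulr1 mul0r subr0 oner_neq0. Qed.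
Lemma nmu_unit n : nmu n \in unitmx.
Proof. by rewrite unit_mx2 mulr1 mulr0 subr0 oner_neq0. Qed.

Lemma nIZ_Mx y : Mx y != 0 -> ~ IZ y.
Proof. by move=> h /Mx_IZ1 e; rewrite e eqxx in h. Qed.

Lemma main_contra (Tm10 T12 : ('M[F]_2 -> C) -> ('M[F]_2 -> C))
  (hA : hecke_op v varpi red iota r (t_m10 varpi teich) Tm10)
  (hB : hecke_op v varpi red iota r (t_12 varpi teich) T12)
  (f1 f2 : 'M[F]_2 -> C) :
  in_ker v varpi red iota r Tm10 f1 -> in_ker v varpi red iota r T12 f2 ->
  (forall x, br 1%:M x = f1 x + f2 x) -> False.
Proof.
move=> [hf1 Tf1] [hf2 Tf2] hsum.
have FA : forall z, \sum_l f1 (aA l *m z) = 0.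
  by move=> z; rewrite -(formulaA hA hf1) Tf1.
have FB : forall z, \sum_l f2 (bB l *m z) = 0.
  by move=> z; rewrite -(formulaB hB hf2) Tf2.
have fIZ : forall x, ~ IZ x -> f1 x + f2 x = 0.
  by move=> x hx; rewrite -hsum /br mulmx1 chitN.
case: (hf1) => _ _ [s1 hs1]; case: (hf2) => _ _ [s2 hs2].
have [N HN] := bound_seq (s1 ++ s2).
have bnd : forall x, (f1 x != 0 \/ f2 x != 0) -> Mx x <= N.
  move=> x hx.
  have [y ys [h [hh ex]]] : exists2 y, y \in s1 ++ s2 & exists h, IZ h /\ x = h *m y.
    case: hx => hx.
      by have [y ys hy] := hs1 _ hx; exists y => //; rewrite mem_cat ys.
    by have [y ys hy] := hs2 _ hx; exists y => //; rewrite mem_cat ys orbT.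
  have xU : x \in unitmx by case: hx => hx; [apply: ind_unit hf1 hx|apply: ind_unit hf2 hx].
  have yU : y \in unitmx by move: xU; rewrite ex unitmx_mul => /andP [].
  by rewrite ex Mx_IZ //; apply: HN.
have claim : forall n : nat, forall x, x \in unitmx -> ~ IZ x -> 0 <= Mx x ->
    N - n%:Z < Mx x -> f1 x = 0 /\ f2 x = 0.
  elim=> [|n IH] x xU nx M0 MN.
    case: (eqVneq (f1 x) 0) => e1; last by have := bnd x (or_introl e1); lia.
    case: (eqVneq (f2 x) 0) => e2; last by have := bnd x (or_intror e2); lia.
    by [].
  have hmem : forall y, y \in unitmx -> Mx y = Mx x + 1 -> f1 y = 0 /\ f2 y = 0.
    move=> y yU My; apply: IH => //; first by apply: nIZ_Mx; rewrite My; lia.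
    - by rewrite My; lia.
    - by rewrite My; lia.
  move: xU nx M0 MN hmem; rewrite (mx2_eta x).
  set x1 := x ord0 ord0; set x2 := x ord0 ord_max; set x3 := x ord_max ord0;
  set x4 := x ord_max ord_max => xU nx M0 MN hmem.
  have dx : x1 * x4 - x2 * x3 != 0 by rewrite -unit_mx2.
  case: (boolP ((x3 != 0) && ((x1 == 0) || (v x3 <= v x1)))) => [/andP [h3 hup]|hdown].
    have hup' : x1 = 0 \/ v x3 <= v x1 by case/orP: hup => [/eqP|]; [left|right].
    have e2 : f2 (mx2 x1 x2 x3 x4) = 0.
      have := FB (bB' 0 *m mx2 x1 x2 x3 x4).
      under eq_bigr do rewrite fanB.
      rewrite (bigD1 0) //= nmu0 mul1mx big1 ?addr0 // => nu nu0.
      apply: (proj2 (hmem _ _ _)); first by rewrite unitmx_mul nmu_unit.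
      by apply: Mx_up_fan.
    split=> //; have := fIZ _ nx; rewrite e2 addr0 //.
  have x10 : x1 != 0.
    apply/negP => /eqP e1; move: hdown dx; rewrite e1 eqxx orTb andbT negbK => /eqP ->.
    by rewrite mul0r mulr0 subrr eqxx.
  have hq : vge v 1 (- x3 / x1).
    case: (eqVneq x3 0) => [->|x30]; first by rewrite oppr0 mul0r; left.
    move: hdown; rewrite x30 (negbTE x10) /= -ltNge => hlt.
    right; rewrite mulNr vN vM ?invr_eq0 // vV //; lia.
  have hI : I2 1 0 (- x3 / x1) 1.
    by split; [apply: O1|apply: O0|done|apply: O1|rewrite mulr1 mul0r subr0 oner_neq0 v1].
  have [hZ hc] := IZ_intro (oner_neq0 F) hI.
  rewrite mulr1 psi1 in hc.
  set i := 1 *: mx2 1 0 (- x3 / x1) 1 in hZ hc.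
  have ex' : i *m mx2 x1 x2 x3 x4 = mx2 x1 x2 0 (x4 - x3 * x2 / x1).
    by rewrite /i scale1r mx2_mul; congr mx2; field.
  have x4' : x4 - x3 * x2 / x1 != 0.
    apply: contraNneq dx => e; have : x1 * x4 - x2 * x3 = x1 * (x4 - x3 * x2 / x1) by field.
    by move=> ->; rewrite e mulr0.
  have e1 : f1 (mx2 x1 x2 x3 x4) = 0.
    case: (hf1) => _ Hm _; have := Hm _ _ hZ xU; rewrite hc mul1r ex' => <-.
    have := FA (aA' 0 *m mx2 x1 x2 0 (x4 - x3 * x2 / x1)).
    under eq_bigr do rewrite fanA.
    rewrite (bigD1 0) //= lmu0 mul1mx big1 ?addr0 // => m m0.
    apply: (proj1 (hmem _ _ _)); first by rewrite unitmx_mul lmu_unit -ex' unitmx_mul (IZ_unit hZ).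
    by rewrite Mx_down_fan // -ex' Mx_IZ.
  split=> //; have := fIZ _ nx; rewrite e1 add0r //.
have claim' : forall x, x \in unitmx -> ~ IZ x -> 0 <= Mx x -> f1 x = 0 /\ f2 x = 0.
  move=> x xU nx M0; apply: (claim (absz N).+1) => //; lia.
have e1 : f1 1%:M = 0.
  have := FA (aA' 0 *m 1%:M); under eq_bigr do rewrite fanA.
  rewrite (bigD1 0) //= lmu0 mul1mx big1 ?addr0 // => m m0.
  have My : Mx (lmu m *m 1%:M) = 1.
    by rewrite mx2_1 Mx_down_fan ?oner_neq0 // -mx2_1 Mx1.
  apply: (proj1 (claim' _ _ _ _)).
  - by rewrite unitmx_mul lmu_unit unitmx1.
  - by apply: nIZ_Mx; rewrite My.
  - by rewrite My.
have e2 : f2 1%:M = 0.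
  have := FB (bB' 0 *m 1%:M); under eq_bigr do rewrite fanB.
  rewrite (bigD1 0) //= nmu0 mul1mx big1 ?addr0 // => n n0.
  have [t0 vt] := teich_unit n0.
  apply: (proj2 (claim' _ _ _ _)); rewrite mulmx1.
  - exact: nmu_unit.
  - exact: nIZ_up.
  - by rewrite /nmu Mx_down ?oner_neq0 // mulr1 v1.
have := hsum 1%:M; rewrite e1 e2 addr0 /br mulmx1 chitE; last by case: IZ_1.
by case: IZ_1 => _ ->; move/eqP; rewrite oner_eq0.
Qed.

End LF.

Unset Implicit Arguments. Set Strict Implicit.

Theorem lemma3p5
  (p : nat) (F : fieldType) (v : F -> int) (varpi : F) (k : finFieldType)
  (red : F -> k) (teich : k -> F)
  (hF : padic_field v p varpi red teich)
  (C : closedFieldType) (hCp : p \in [pchar C])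
  (hCalg : forall c : C, exists n, (0 < n)%N /\ c ^+ (p ^ n) = c)
  (iota : {rmorphism k -> C})
  (r : nat) (hr : (0 < r < #|k| - 1)%N)
  (Tm10 T12 : ('M[F]_2 -> C) -> ('M[F]_2 -> C))
  (hTm10 : hecke_op v varpi red iota r (t_m10 varpi teich) Tm10)
  (hT12 : hecke_op v varpi red iota r (t_12 varpi teich) T12) :
  ~ ( (forall f, in_ind v varpi red iota r f ->
         exists f1 f2, in_ker v varpi red iota r Tm10 f1 /\
                       in_ker v varpi red iota r T12 f2 /\
                       forall x, f x = f1 x + f2 x)
      /\ (forall f, in_ker v varpi red iota r Tm10 f ->
                    in_ker v varpi red iota r T12 f -> f = (fun _ => 0)) ).
Proof.
move=> [Hdec _].
have hb := br_ind hF iota r (unitmx1 F 2).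
have [f1 [f2 [k1 [k2 hs]]]] := Hdec _ hb.
exact: (main_contra hF hTm10 hT12 k1 k2 hs).
Qed.
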